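(* Let $w\in F_2$ be a word in $x,y$ and $G=\mathrm{SL}(2,\mathbb{C})$. If the trace map $\psi_w$ of $w$ is Big, then the word map $w:G^2\to G$ is almost surjective, i.e. its image contains $G\setminus\{-\mathrm{id}\}$.
   Context: For a word $w(x,y)$ there are polynomials $P_w(s,t,u)$, $Q_w(s,t,u)$ with integer coefficients such that for all $x,y\in G$: $\mathrm{tr}(w(x,y))=P_w(\mathrm{tr}\,x,\mathrm{tr}\,y,\mathrm{tr}\,xy)$ and $\mathrm{tr}(w(x,y)y)=Q_w(\mathrm{tr}\,x,\mathrm{tr}\,y,\mathrm{tr}\,xy)$. The trace map is $\psi_w:\mathbb{C}^3\to\mathbb{C}^3$, $\psi_w(s,t,u)=(P_w(s,t,u),t,Q_w(s,t,u))$. For $a\in\mathbb{C}$ let $\psi_a:\mathbb{C}^2_{s,u}\to\mathbb{C}^2$, $\psi_a(s,u)=(P_w(s,a,u),Q_w(s,a,u))$; $\psi_a$ is Big if $\psi_a(\mathbb{C}^2)=\mathbb{C}^2\setminus T_a$ for a finite set $T_a$, and $\psi_w$ is Big if $\psi_a$ is Big for some $a\in\mathbb{C}$. *)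

(* Defs.v *)
From HB Require Import structures.
From mathcomp Require Import all_boot all_order all_algebra.
From mathcomp Require Import reals complex.
From mathcomp Require mpoly.
Set Implicit Arguments. Unset Strict Implicit. Unset Printing Implicit Defensive.
Import Order.TTheory GRing.Theory Num.Theory.
Local Open Scope ring_scope.

(* A letter of a word in F_2 = <x,y>: (is_y, is_inverse). *)
Definition letter := (bool * bool)%type.
(* A word w(x,y) in F_2 (not necessarily reduced; the word map only depends
   on the group element). *)
Definition word := seq letter.

Section Words.
Variable C : comUnitRingType.

Definition eval_letter (x y : 'M[C]_2) (l : letter) : 'M[C]_2 :=
  let g := if l.1 then y else x in if l.2 then invmx g else g.

Definition eval_word (w : word) (x y : 'M[C]_2) : 'M[C]_2 :=
  foldr (fun l acc => eval_letter x y l *m acc) 1%:M w.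

Definition ev3 (P : mpoly.mpoly 3 int) (s t u : C) : C :=
  mpoly.meval (fun i : 'I_3 => [:: s; t; u]`_i) (mpoly.map_mpoly (fun z : int => z%:~R) P).
End Words.

Section Big.
Variable R : realType.
Notation C := (R[i])%type.

Definition trace_polys (w : word) (P Q : mpoly.mpoly 3 int) : Prop :=
  forall x y : 'M[C]_2, \det x = 1 -> \det y = 1 ->
    \tr (eval_word w x y) = ev3 P (\tr x) (\tr y) (\tr (x *m y)) /\
    \tr (eval_word w x y *m y) = ev3 Q (\tr x) (\tr y) (\tr (x *m y)).

Definition psi_a_big (P Q : mpoly.mpoly 3 int) (a : C) : Prop :=
  exists T : seq (C * C), forall z : C * C,
    (exists s u : C, (ev3 P s a u, ev3 Q s a u) = z) <-> z \notin T.

Definition trace_map_big (w : word) : Prop :=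
  exists P Q : mpoly.mpoly 3 int, trace_polys w P Q /\ exists a : C, psi_a_big P Q a.
End Big.

(* Main.v *)
Require Import Defs.
From HB Require Import structures.
From mathcomp Require Import all_boot all_order all_algebra.
From mathcomp Require Import reals complex.
From mathcomp Require mpoly.
From mathcomp Require Import ring.
Import Order.TTheory GRing.Theory Num.Theory.
Local Open Scope ring_scope.
Set Implicit Arguments. Unset Strict Implicit.

Section F.
Variable C : fieldType.
Implicit Types A B : 'M[C]_2.

Lemma ord2P (i : 'I_2) : i = 0 \/ i = 1.
Proof. case: i => [[|[|n]] Hn]; [left|right|]; try by apply: val_inj. by []. Qed.

Lemma det2 A : \det A = A 0 0 * A 1 1 - A 0 1 * A 1 0.
Proof.
rewrite (expand_det_row _ 0) !big_ord_recl big_ord0 /cofactor !det_mx11 !mxE /=.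
set l1 := lift _ _. set l2 := lift _ _.
have -> : l2 = 0 by apply: val_inj.
have -> : l1 = 1 by apply: val_inj.
rewrite /= expr0 expr1 mul1r mulN1r addr0 mulrN. by [].
Qed.

Lemma tr2 A : \tr A = A 0 0 + A 1 1.
Proof.
rewrite /mxtrace !big_ord_recl big_ord0 addr0.
by have -> : lift ord0 ord0 = 1 :> 'I_2 by apply: val_inj.
Qed.

Lemma mul2E A B i j : (A * B) i j = A i 0 * B 0 j + A i 1 * B 1 j.
Proof.
rewrite -mulmxE !mxE !big_ord_recl big_ord0 addr0.
by have -> : lift ord0 ord0 = 1 :> 'I_2 by apply: val_inj.
Qed.

Lemma meq2 A B : A 0 0 = B 0 0 -> A 0 1 = B 0 1 -> A 1 0 = B 1 0 -> A 1 1 = B 1 1 -> A = B.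
Proof.
move=> h00 h01 h10 h11; apply/matrixP => i j.
by case: (ord2P i) => ->; case: (ord2P j) => ->.
Qed.

Definition mk (a b c d : C) : 'M[C]_2 :=
  \matrix_(i, j) if i == 0 then (if j == 0 then a else b) else (if j == 0 then c else d).

Lemma mkE a b c d : [/\ mk a b c d 0 0 = a, mk a b c d 0 1 = b, mk a b c d 1 0 = c & mk a b c d 1 1 = d].
Proof. by rewrite !mxE. Qed.

Lemma mk00 a b c d : mk a b c d 0 0 = a. Proof. by rewrite mxE. Qed.
Lemma mk01 a b c d : mk a b c d 0 1 = b. Proof. by rewrite mxE. Qed.
Lemma mk10 a b c d : mk a b c d 1 0 = c. Proof. by rewrite mxE. Qed.
Lemma mk11 a b c d : mk a b c d 1 1 = d. Proof. by rewrite mxE. Qed.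
Definition mkE' := (mk00, mk01, mk10, mk11).

Lemma unitE A : (A \is a GRing.unit) = (\det A != 0).
Proof. by rewrite -unitfE -unitmxE. Qed.

Definition nonscalar A := ~ (A 0 1 = 0 /\ A 1 0 = 0 /\ A 0 0 = A 1 1).

Definition Pm A (v1 v2 : C) := mk v1 (A 0 0 * v1 + A 0 1 * v2) v2 (A 1 0 * v1 + A 1 1 * v2).
Definition Km A := mk 0 (- \det A) 1 (\tr A).

Lemma PmK A v1 v2 : A * Pm A v1 v2 = Pm A v1 v2 * Km A.
Proof.
apply: meq2; rewrite !mul2E /Pm /Km det2 tr2 !mkE'; ring.
Qed.

Lemma detPm A v1 v2 : \det (Pm A v1 v2) = v1 * (A 1 0 * v1 + A 1 1 * v2) - (A 0 0 * v1 + A 0 1 * v2) * v2.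
Proof. by rewrite det2 /Pm !mkE'. Qed.

Lemma exPm A : nonscalar A -> exists v1 v2, Pm A v1 v2 \is a GRing.unit.
Proof.
move=> ns; case: (eqVneq (A 1 0) 0) => h10.
  case: (eqVneq (A 0 1) 0) => h01.
    exists 1, 1; rewrite unitE detPm h10 h01.
    apply/eqP => h; apply: ns; split=> //; split=> //.
    apply/eqP; rewrite eq_sym -subr_eq0 -h; apply/eqP; ring.
  exists 0, 1; rewrite unitE detPm h10.
  apply/eqP => h; move/eqP: h01; apply; apply/eqP; rewrite -oppr_eq0 -h; apply/eqP; ring.
exists 1, 0; rewrite unitE detPm.
apply/eqP => h; move/eqP: h10; apply; rewrite -h; ring.
Qed.

Lemma conj2 A B : \tr A = \tr B -> \det A = \det B -> nonscalar A -> nonscalar B ->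
  exists h : 'M[C]_2, h \is a GRing.unit /\ h * A * h^-1 = B.
Proof.
move=> ht hd nA nB.
have [a1 [a2 uP]] := exPm nA; have [b1 [b2 uQ]] := exPm nB.
set P := Pm A a1 a2 in uP; set Q := Pm B b1 b2 in uQ.
have eA : A = P * Km A * P^-1 by rewrite -PmK -mulrA mulrV // mulr1.
have eB : B = Q * Km B * Q^-1 by rewrite -PmK -mulrA mulrV // mulr1.
have eK : Km A = Km B by rewrite /Km ht hd.
exists (Q * P^-1); split; first by rewrite unitrMl ?unitrV.
rewrite invrM ?unitrV // invrK {1}eA eB eK.
rewrite !mulrA mulrVK // divrK //.
Qed.
End F.

Section W.
Variable C : fieldType.
Implicit Types x y h : 'M[C]_2.


Lemma eval_word_conj (w : word) h x y : h \is a GRing.unit -> x \is a GRing.unit -> y \is a GRing.unit ->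
  eval_word w (h * x * h^-1) (h * y * h^-1) = h * eval_word w x y * h^-1.
Proof.
move=> uh ux uy; elim: w => [|l w IH] /=.
  by rewrite mulr1 divrr.
rewrite IH /eval_letter mulmxE.
have E : forall z, z \is a GRing.unit -> invmx (h * z * h^-1) = h * invmx z * h^-1.
  move=> z uz; change (invmx (h * z * h^-1)) with ((h * z * h^-1)^-1).
  change (invmx z) with z^-1.
  by rewrite invrM ?unitrV ?unitrMl // invrM // invrK mulrA.
case: l => [[] []] /=; rewrite ?E //; change (invmx ?z) with z^-1;
  rewrite -!mulrA; congr (_ * _); rewrite !mulrA divrK //.
Qed.

Lemma det_eval (w : word) x y : \det x = 1 -> \det y = 1 -> \det (eval_word w x y) = 1.
Proof.
move=> dx dy; elim: w => [|l w IH] /=; first by rewrite det1.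
rewrite det_mulmx IH mulr1 /eval_letter.
by case: l => [[] []] /=; rewrite ?det_inv ?dx ?dy ?invr1.
Qed.

Lemma eval_word1 (w : word) : eval_word w (1%:M : 'M[C]_2) 1%:M = 1%:M.
Proof.
elim: w => [|l w IH] //=; rewrite IH /eval_letter.
by case: l => [[] []] /=; rewrite ?invmx1 mul1mx.
Qed.
End W.

Section X.
Variable C : numClosedFieldType.

Lemma quad_root (B c : C) : exists p : C, p ^+ 2 + B * p + c = 0.
Proof.
set D := B ^+ 2 - 4 * c; set d := sqrtC D.
have hd : d ^+ 2 = D by rewrite sqrtCK.
have n2 : (2 : C) != 0 by rewrite pnatr_eq0.
have n4 : (4 : C) != 0 by rewrite pnatr_eq0.
exists ((d - B) / 2).
have e2p : (d - B) / 2 * 2 = d - B by rewrite divfK.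
apply: (mulfI n4); rewrite mulr0.
transitivity (((d - B) / 2 * 2) ^+ 2 + 2 * B * ((d - B) / 2 * 2) + 4 * c); first by ring.
rewrite e2p.
transitivity (d ^+ 2 - D); last by rewrite hd subrr.
rewrite /D; ring.
Qed.

Lemma fricke (s a u : C) : exists x y : 'M[C]_2,
  [/\ \det x = 1, \det y = 1, \tr x = s, \tr y = a & \tr (x *m y) = u].
Proof.
have [p hp] := quad_root (s - a) (2 - u).
exists (mk s 1 (-1) 0), (mk p (-1) (1 - p * (a - p)) (a - p)).
rewrite !det2 !tr2 mulmxE !mul2E !mkE'; split.
- ring.
- ring.
- ring.
- ring.
- transitivity (p ^+ 2 + (s - a) * p + (2 - u) + u); first ring.
  by rewrite hp add0r.
Qed.

Lemma fresh (s : seq C) : exists b, b \notin s.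
Proof.
have key : forall z, z \in s -> `|z| <= \sum_(t <- s) `|t|.
  elim: s => [|t s IH] z //=; rewrite in_cons big_cons => /orP [/eqP -> | zs].
    by rewrite lerDl sumr_ge0.
  by rewrite (le_trans (IH _ zs)) // lerDr.
exists (1 + \sum_(t <- s) `|t|); apply/negP => /key.
rewrite ger0_norm; last by rewrite addr_ge0 // sumr_ge0.
by rewrite gerDr ler10.
Qed.
End X.

Lemma sq1 (C : fieldType) (c : C) : c * c = 1 -> c = 1 \/ c = -1.
Proof.
move=> h.
have : (c - 1) * (c + 1) == 0.
  apply/eqP; transitivity (c * c - 1); first ring. by rewrite h subrr.
rewrite mulf_eq0 => /orP [|] /eqP e; [left|right].
- by apply/eqP; rewrite -subr_eq0 e.
- by apply/eqP; rewrite -subr_eq0 opprK e.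
Qed.

Lemma scalar_cases (C : fieldType) (A : 'M[C]_2) : \det A = 1 -> ~ nonscalar A ->
  A = 1%:M \/ A = - 1%:M.
Proof.
move=> dA nA.
have [h01 [h10 h00]] : A 0 1 = 0 /\ A 1 0 = 0 /\ A 0 0 = A 1 1.
  case: (eqVneq (A 0 1) 0) => e1; last by exfalso; apply: nA; move=> [h _]; rewrite h eqxx in e1.
  case: (eqVneq (A 1 0) 0) => e2; last by exfalso; apply: nA; move=> [_ [h _]]; rewrite h eqxx in e2.
  case: (eqVneq (A 0 0) (A 1 1)) => e3; last by exfalso; apply: nA; move=> [_ [_ h]]; rewrite h eqxx in e3.
  by [].
have : A 0 0 * A 0 0 = 1 by rewrite -dA det2 h01 h10 mul0r subr0 h00.
case/sq1 => e; [left|right]; apply: meq2; rewrite ?mxE /= ?h01 ?h10 -?h00 ?e //; 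
  rewrite ?oppr0 //.
Qed.

Lemma ns_dec (C : fieldType) (A : 'M[C]_2) : nonscalar A \/ ~ nonscalar A.
Proof.
rewrite /nonscalar.
case: (eqVneq (A 0 1) 0) => e1; last by left => -[h _]; rewrite h eqxx in e1.
case: (eqVneq (A 1 0) 0) => e2; last by left => -[_ [h _]]; rewrite h eqxx in e2.
case: (eqVneq (A 0 0) (A 1 1)) => e3; last by left => -[_ [_ h]]; rewrite h eqxx in e3.
by right; apply.
Qed.

Theorem proposition8p2 (R : realType) (w : word) :
  trace_map_big R w ->
  forall g : 'M[R[i]]_2, \det g = 1 -> g <> - 1%:M ->
    exists x y : 'M[R[i]]_2, \det x = 1 /\ \det y = 1 /\ eval_word w x y = g.
Proof.
move=> [P [Q [HPQ [a [T HT]]]]] g dg ng.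
case: (ns_dec g) => [nsg|sg]; last first.
  case: (scalar_cases dg sg) => eg //.
  by exists 1%:M, 1%:M; rewrite det1 eval_word1 eg.
have [b hb] := fresh (map snd T ++ [:: a; - a]).
move: hb; rewrite mem_cat !inE negb_or => /andP [hbT /norP [hba hbna]].
have [s [u hsu]] : exists s u, (ev3 P s a u, ev3 Q s a u) = (\tr g, b).
  apply/HT; apply/negP => hin; move/negP: hbT; apply.
  by apply/mapP; exists (\tr g, b).
have [x [y [dx dy tx ty txy]]] := fricke s a u.
have [HW1 HW2] := HPQ x y dx dy.
case: hsu; rewrite -tx -ty -txy -HW1 -HW2 => htW htWy.
set W := eval_word w x y in htW htWy.
have dW : \det W = 1 by apply: det_eval.
have nsW : nonscalar W.
  move=> sW; case: (scalar_cases dW (fun h => h sW)) => eW.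
    by move/eqP: hba; apply; rewrite -htWy eW mul1mx ty.
  move/eqP: hbna; apply; rewrite -htWy eW mulNmx mul1mx -scaleN1r mxtraceZ ty mulN1r.
  by [].
have [h [uh ehW]] := conj2 htW (etrans dW (esym dg)) nsW nsg.
have ux : x \is a GRing.unit by rewrite unitE dx oner_eq0.
have uy : y \is a GRing.unit by rewrite unitE dy oner_eq0.
exists (h * x * h^-1), (h * y * h^-1); split; last split.
- by rewrite -!mulmxE !det_mulmx dx mulr1 -det_mulmx mulmxE mulrV // det1.
- by rewrite -!mulmxE !det_mulmx dy mulr1 -det_mulmx mulmxE mulrV // det1.
- by rewrite eval_word_conj.
Qed.
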